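(* Let $G(\circ)$, $G(\ast)$ be groups on a set $G$ of size $n$ and $a\in G$ with $\mathrm{dist}_a=2$. Then $\{|a|_\circ,|a|_\ast\}=\{n,n/2\}$.
   Context: $|a|_\circ$, $|a|_\ast$ are the orders of $a$ in $G(\circ)$, $G(\ast)$. $\mathrm{dist}_a=|\{b\in G: a\circ b\ne a\ast b\}|$. *)

(* Defs.v *)
From mathcomp Require Import all_boot all_fingroup.
Set Implicit Arguments. Unset Strict Implicit. Unset Printing Implicit Defensive.
Local Open Scope group_scope.

(* Two group structures on one finite set G are modelled as two finite group
   types gT1 (the group G(o)) and gT2, the underlying set of G being identified
   with the carrier of gT1 and transported to gT2 via a bijection f.  Thus the
   second operation on G is  x * y := f^-1 (f x * f y).
   dist f a = #|{b in G : a o b <> a * b}|. *)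
Definition dist (gT1 gT2 : finGroupType) (f : gT1 -> gT2) (a : gT1) : nat :=
  #|[set b : gT1 | f (a * b) != f a * f b]|.

(* Main.v *)
Require Import Defs.
From mathcomp Require Import all_boot all_fingroup zify cyclic.
Set Implicit Arguments. Unset Strict Implicit.

Lemma dvd_small d n : 0 < n -> n < d -> d %| n -> False.
Proof. move=> n0 nd /(dvdn_leq n0); lia. Qed.

Lemma per_mod (T : eqType) (L : T -> T) k
  (hL : forall b j, (iter j L b == b) = (k %| j)) b j :
  iter j L b = iter (j %% k) L b.
Proof.
rewrite {1}(divn_eq j k) iterD.
by apply/eqP; rewrite hL dvdn_mull.
Qed.

Lemma per_back (T : eqType) (L : T -> T) k (k0 : 0 < k)
  (hL : forall b j, (iter j L b == b) = (k %| j)) c d i :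
  iter i L c = d -> c = iter ((k.-1) * i) L d.
Proof.
move=> <-; rewrite -iterD; apply/esym/eqP; rewrite hL.
have -> : (k.-1 * i + i = k * i)%N by destruct k; [done | simpl; lia].
exact: dvdn_mulr.
Qed.

Lemma per_ne (T : eqType) (L : T -> T) k
  (hL : forall b j, (iter j L b == b) = (k %| j)) b i :
  0 < i < k -> iter i L b != b.
Proof.
move=> /andP[i0 ik]; rewrite hL; apply/negP => /(dvd_small i0 ik) [].
Qed.

Lemma per_exact (T : eqType) (M : T -> T) k'
  (hM : forall b j, (iter j M b == b) = (k' %| j)) (k0 : 0 < k') b m :
  0 < m -> iter m M b = b -> (forall i, 0 < i < m -> iter i M b != b) ->
  k' = m.
Proof.
move=> m0 /eqP; rewrite hM => /(dvdn_leq m0) le hne.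
case: (ltngtP k' m) => // lt.
  by move: (hne k'); rewrite k0 lt hM dvdnn => /(_ erefl).
lia.
Qed.

Lemma caseA (T : finType) (L M : T -> T) k k' (k0 : 0 < k) (k'0 : 0 < k')
  (hL : forall b j, (iter j L b == b) = (k %| j))
  (hM : forall b j, (iter j M b == b) = (k' %| j)) b1 b2
  (ne12 : b1 != b2)
  (agree : forall x, x != b1 -> x != b2 -> M x = L x)
  (c1 : M b1 = L b2) (c2 : M b2 = L b1) j0 :
  b2 = iter j0 L b1 -> k = #|T| /\ 2 * k' = #|T|.
Proof.
rewrite (per_mod hL) => e2; set j := j0 %% k in e2.
have jk : j < k by rewrite ltn_mod.
have j0' : 0 < j.
  rewrite lt0n; apply/negP => /eqP jz; move: e2; rewrite jz /= => e.
  by rewrite e eqxx in ne12.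
have cl1 : forall i, i < k - j -> iter i.+1 M b1 = iter (j + i.+1) L b1.
  elim=> [|i IH] hi.
    by rewrite /= c1 e2 addn1.
  rewrite iterS IH; last lia.
  rewrite agree.
    by rewrite -iterS !addnS.
    by apply: (per_ne hL); apply/andP; split; lia.
  rewrite addnC iterD -e2; apply: (per_ne hL); apply/andP; split; lia.
have ne2 : forall i, 0 < i < j -> iter i L b1 != b2.
  move=> i hi; apply/eqP => e.
  have : iter (j - i) L b2 == b2.
    by rewrite -{1}e -iterD subnK ?e2 //; lia.
  by rewrite hL => dv; case: (dvd_small _ _ dv); lia.
have cl2 : forall i, i < j -> iter i.+1 M b2 = iter i.+1 L b1.
  elim=> [|i IH] hi; first by rewrite /= c2.
  rewrite iterS IH; last lia.
  rewrite agree //; first by apply: (per_ne hL); apply/andP; split; lia.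
  by apply: ne2; lia.
have ekj : k' = k - j.
  apply: (@per_exact _ M k' hM k'0 b1); first lia.
    have h := cl1 (k - j).-1; rewrite prednK in h; last lia.
    rewrite h; last lia.
    by rewrite subnKC ?(ltnW jk) //; apply/eqP; rewrite hL.
  move=> i hi; have h := cl1 i.-1; rewrite prednK in h; last lia.
  rewrite h; last lia. apply: (per_ne hL); apply/andP; split; lia.
have ej : k' = j.
  apply: (@per_exact _ M k' hM k'0 b2) => //.
    have h := cl2 j.-1; rewrite prednK in h => //.
    by rewrite h ?e2 //; lia.
  move=> i hi; have h := cl2 i.-1; rewrite prednK in h; last lia.
  rewrite h; last lia.
  apply/eqP => e; move: (ne2 i hi); rewrite e eqxx //.
have kk : k = 2 * k' by lia.
have surj : forall c, exists i : 'I_k, c = iter i L b1.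
  move=> c; case: (boolP [exists i : 'I_k, c == iter i L b1]).
    by move/existsP => [i /eqP ->]; exists i.
  move/existsPn => hn.
  have notin : forall i, iter i L c != b1 /\ iter i L c != b2.
    move=> i; split; apply/eqP => e.
      move: (per_back k0 hL e); rewrite (per_mod hL) => e'.
      by move: (hn (Ordinal (ltn_pmod (k.-1 * i) k0))); rewrite /= e' eqxx.
    move: (per_back k0 hL e); rewrite e2 -iterD (per_mod hL) => e'.
    by move: (hn (Ordinal (ltn_pmod (k.-1 * i + j) k0))); rewrite /= e' eqxx.
  have same : forall i, iter i M c = iter i L c.
    elim=> [|i IH] //; rewrite !iterS IH; case: (notin i) => h1 h2.
    by rewrite agree.
  have : iter k' L c == c by rewrite -same hM.
  by rewrite hL => dv; case: (dvd_small _ _ dv); lia.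
have cardT : #|T| = k.
  apply/eqP; rewrite eqn_leq; apply/andP; split.
    pose F := fun i : 'I_k => iter i L b1.
    apply: (@leq_trans #|codom F|).
      apply/subset_leq_card/subsetP => c _; have [i ->] := surj c.
      exact: codom_f.
    by apply: (leq_trans (card_size _)); rewrite size_codom card_ord.
  pose F := fun i : 'I_k => iter i L b1.
  have injF : injective F.
    have aux : forall i i' : 'I_k, i < i' -> F i <> F i'.
      move=> i i' lt e; have : iter (i' - i) L (F i) == F i.
        by rewrite {2}e /F -iterD subnK // ltnW.
      rewrite hL => dv; apply: (dvd_small _ _ dv); [lia | have := ltn_ord i'; lia].
    move=> i i' e; case: (ltngtP i i') => lt.
    - by case: (aux _ _ lt e).
    - by case: (aux _ _ lt (esym e)).
    - exact: val_inj.
  by have := leq_card F injF; rewrite card_ord.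
split; lia.
Qed.

Lemma cross (T : finType) (L M : T -> T) k k' (k0 : 0 < k) (k'0 : 0 < k')
  (hL : forall b j, (iter j L b == b) = (k %| j))
  (hM : forall b j, (iter j M b == b) = (k' %| j)) b1 b2
  (agree : forall x, x != b1 -> x != b2 -> M x = L x)
  (d1 : M b1 != L b1) : M b1 = L b2.
Proof.
pose c := M b1; pose d := iter k.-1 L c.
have Ld : L d = c by rewrite /d -iterS prednK //; apply/eqP; rewrite hL.
have Minj : forall x y, M x = M y -> x = y.
  move=> x y e.
  have h : forall z, iter k'.-1 M (M z) = z.
    by move=> z; rewrite -iterSr prednK //; apply/eqP; rewrite hM.
  by rewrite -(h x) e h.
case: (eqVneq d b2) => [<- | nd2]; first by rewrite Ld.
case: (eqVneq d b1) => [ed1 | nd1].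
  by rewrite ed1 in Ld; rewrite Ld eqxx in d1.
have := agree d nd1 nd2; rewrite Ld => /Minj ed.
by rewrite ed eqxx in nd1.
Qed.

Lemma mainA (T : finType) (L M : T -> T) k k' (k0 : 0 < k) (k'0 : 0 < k')
  (hL : forall b j, (iter j L b == b) = (k %| j))
  (hM : forall b j, (iter j M b == b) = (k' %| j)) b1 b2
  (ne12 : b1 != b2)
  (agree : forall x, x != b1 -> x != b2 -> M x = L x)
  (d1 : M b1 != L b1) (d2 : M b2 != L b2) :
  (k = #|T| /\ 2 * k' = #|T|) \/ (2 * k = #|T| /\ k' = #|T|).
Proof.
have c1 := cross k0 k'0 hL hM agree d1.
have agree' : forall x, x != b2 -> x != b1 -> M x = L x.
  by move=> x h1 h2; apply: agree.
have c2 := cross k0 k'0 hL hM agree' d2.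
case: (boolP [exists i : 'I_k, b2 == iter i L b1]).
  move/existsP => [i /eqP e]; left.
  exact: (caseA k0 k'0 hL hM ne12 agree c1 c2 e).
move/existsPn => hn; right.
have cl : forall i, i < k -> iter i.+1 M b1 = iter i.+1 L b2.
  elim=> [|i IH] hi; first by rewrite /= c1.
  rewrite iterS IH; last lia.
  rewrite agree //.
    apply/eqP => e; move: (per_back k0 hL e); rewrite (per_mod hL) => e'.
    by move: (hn (Ordinal (ltn_pmod (k.-1 * i.+1) k0))); rewrite /= -e' eqxx.
  by apply: (per_ne hL); apply/andP; split; lia.
have e : b2 = iter k M b1.
  have h := cl k.-1; rewrite prednK in h => //.
  rewrite h; last lia. by apply/esym/eqP; rewrite hL.
have agreeS : forall x, x != b1 -> x != b2 -> L x = M x.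
  by move=> x h1 h2; rewrite agree.
have [A B] := caseA k'0 k0 hM hL ne12 agreeS (esym c2) (esym c1) e.
by split.
Qed.

Local Open Scope group_scope.

Theorem proposition4p14 (gT1 gT2 : finGroupType) (f : gT1 -> gT2)
  (f_bij : bijective f) (a : gT1) :
  dist f a = 2 ->
  (#[a] = #|gT1| /\ 2 * #[f a] = #|gT1|)%N \/
  (2 * #[a] = #|gT1| /\ #[f a] = #|gT1|)%N.
Proof.
case: f_bij => g fK gK.
rewrite /dist => /eqP /cards2P [b1 [b2 [ne12 eS]]].
pose L := fun b : gT1 => a * b.
pose M := fun b : gT1 => g (f a * f b).
have iL : forall j b, iter j L b = a ^+ j * b.
  by elim=> [|j IH] b; rewrite ?mul1g //= IH /L expgS mulgA.
have iM : forall j b, iter j M b = g (f a ^+ j * f b).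
  elim=> [|j IH] b; first by rewrite /= mul1g fK.
  by rewrite iterS IH /M gK expgS mulgA.
have hL : forall b j, (iter j L b == b) = (#[a] %| j)%N.
  move=> b j; rewrite iL order_dvdn -{2}(mul1g b).
  exact: (inj_eq (@mulIg _ b)).
have hM : forall b j, (iter j M b == b) = (#[f a] %| j)%N.
  move=> b j; rewrite iM order_dvdn.
  apply/eqP/eqP => [e | ->]; last by rewrite mul1g fK.
  by apply: (@mulIg _ (f b)); rewrite mul1g -{2}e gK.
have inS : forall x, (x \in [set b | f (a * b) != f a * f b]) = (M x != L x).
  move=> x; rewrite inE /M /L; congr negb; apply/eqP/eqP => [<- | e].
    by rewrite fK.
  by rewrite -e gK.
have agree : forall x, x != b1 -> x != b2 -> M x = L x.
  move=> x h1 h2; apply/eqP; apply: contraR (_ : x \notin [set b1; b2]).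
    by rewrite -eS inS.
  by rewrite !inE negb_or h1 h2.
have d1 : M b1 != L b1 by rewrite -inS eS !inE eqxx.
have d2 : M b2 != L b2 by rewrite -inS eS !inE eqxx orbT.
exact: (mainA (order_gt0 a) (order_gt0 (f a)) hL hM ne12 agree d1 d2).
Qed.
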